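(* Let $G=(V,E)$ be a finite graph. The function $S^B_G$ is non-negative and concave on $FM(G)$.
   Context: $FM(G)=\{\mathbf{x}\in\mathbb{R}^E: x_e\ge0,\ \sum_{e\in\partial v}x_e\le1\ \forall v\in V\}$, where $\partial v$ is the set of edges incident to $v$, and \[ S^B_G(\mathbf{x})=\sum_{e\in E}\big( -x_e\ln x_e +(1-x_e)\ln (1-x_e)\big) - \sum_{v\in V}\Big( 1-\sum_{e\in \partial v} x_e\Big)\ln\Big( 1-\sum_{e\in \partial v}x_e\Big), \] with $0\ln 0=0$. *)

(* Defs.v *)
From HB Require Import structures.
From mathcomp Require Import all_boot all_order all_algebra.
From mathcomp Require Import all_classical all_reals.
From mathcomp Require Import exp.
Set Implicit Arguments. Unset Strict Implicit. Unset Printing Implicit Defensive.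
Import Order.TTheory GRing.Theory Num.Theory.
Local Open Scope ring_scope.

(* A finite simple graph G = (V, E): V a finite type, adj a symmetric,
   irreflexive boolean relation.  The edge set E is the finite type of
   2-element vertex sets {u, v} with adj u v. *)
Definition is_edge (V : finType) (adj : rel V) (e : {set V}) : bool :=
  [exists u, exists v, adj u v && (e == [set u; v])].

Definition edge (V : finType) (adj : rel V) := {e : {set V} | is_edge adj e}.

Definition vsum (R : realType) (V : finType) (adj : rel V)
  (x : edge adj -> R) (v : V) : R :=
  \sum_(e : edge adj | v \in val e) x e.

Definition xlnx (R : realType) (t : R) : R := if t == 0 then 0 else t * ln t.

Definition FM (R : realType) (V : finType) (adj : rel V)
  (x : edge adj -> R) : Prop :=
  (forall e, 0 <= x e) /\ (forall v, vsum x v <= 1).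

Definition SB (R : realType) (V : finType) (adj : rel V)
  (x : edge adj -> R) : R :=
  \sum_(e : edge adj) (- xlnx (x e) + xlnx (1 - x e))
  - \sum_(v : V) xlnx (1 - vsum x v).

(* Main.v *)
Require Import Defs.
From HB Require Import structures.
From mathcomp Require Import all_boot all_order all_algebra.
From mathcomp Require Import all_classical all_reals.
From mathcomp Require Import exp.
From mathcomp Require Import topology normedtype derive realfun.
From mathcomp Require Import ring lra.
Import Order.TTheory GRing.Theory Num.Theory numFieldNormedType.Exports.
Local Open Scope classical_set_scope.
Local Open Scope ring_scope.

Section Calc.
Variable R : realType.

Lemma cont01 (f df : R -> R) :
  (forall t : R, 0 <= t <= 1 -> is_derive t (1:R) f (df t)) ->
  forall a b, 0 <= a -> b <= 1 -> {within `[a, b], continuous f}.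
Proof.
move=> hf a b a0 b1; apply: continuous_in_subspaceT => x.
rewrite inE /= in_itv /= => /andP[ax xb].
have : is_derive x 1 f (df x).
  apply: hf; rewrite (le_trans a0 ax) /=; exact: le_trans xb b1.
move=> [dfx _]; exact/differentiable_continuous/derivable1_diffP.
Qed.

Lemma calc01 (f df ddf : R -> R) :
  (forall t : R, 0 <= t <= 1 -> is_derive t (1:R) f (df t)) ->
  (forall t : R, 0 <= t <= 1 -> is_derive t (1:R) df (ddf t)) ->
  (forall t : R, 0 <= t <= 1 -> 0 <= ddf t) ->
  f 0 = 0 -> df 0 = 0 -> 0 <= f 1.
Proof.
move=> hf hdf hddf f0 df0.
have itv01 (a b x : R) : 0 <= a -> b <= 1 -> x \in `]a, b[ -> 0 <= x <= 1.
  move=> a0 b1; rewrite in_itv /= => /andP[ax xb].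
  by rewrite (le_trans a0 (ltW ax)) (le_trans (ltW xb) b1).
have [c c01 Hc] := @MVT_segment R f df 0 1 ler01
  (fun x hx => hf x (itv01 0 1 x (lexx 0) (lexx 1) hx)) (@cont01 f df hf 0 1 (lexx 0) (lexx 1)).
move: c01; rewrite in_itv /= => /andP[c0 c1].
have [d d01 Hd] := @MVT_segment R df ddf 0 c c0
  (fun x hx => hdf x (itv01 0 c x (lexx 0) c1 hx)) (@cont01 df ddf hdf 0 c (lexx 0) c1).
move: d01; rewrite in_itv /= => /andP[d0 dc].
have : 0 <= df c.
  have -> : df c = ddf d * (c - 0) by rewrite -Hd df0 subr0.
  apply: mulr_ge0; last by rewrite subr0.
  by apply: hddf; rewrite d0 (le_trans dc c1).
by rewrite -(subr0 (f 1)) -f0 Hc subr0 mulr1.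
Qed.
End Calc.

Section Calc.
Variable R : realType.

Lemma D_aff (a b t : R) : is_derive t (1:R) (fun s : R => a + s * b) b.
Proof.
have -> : (fun s : R => a + s * b) = (cst a + (id * cst b))%R by [].
apply: is_derive_eq.
by rewrite /= !scaler0 !add0r /GRing.scale /= mulr1.
Qed.

Lemma D_ln (a b t : R) : 0 < a + t * b ->
  is_derive t (1:R) (fun s : R => ln (a + s * b)) (b / (a + t * b)).
Proof.
move=> h.
have := @is_derive1_comp R (@ln R) (fun s : R => a + s * b) t (a + t * b)^-1 b.
move=> H; apply: is_derive_eq; first apply: H.
- exact: is_derive1_ln.
- exact: D_aff.
by rewrite mulrC.
Qed.

Lemma D_xln (a b t : R) : 0 < a + t * b ->
  is_derive t (1:R) (fun s : R => (a + s * b) * ln (a + s * b)) (b * (ln (a + t * b) + 1)).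
Proof.
move=> h.
have H := is_deriveM (D_aff a b t) (@D_ln a b t h).
eapply is_derive_eq; first exact H.
rewrite /GRing.scale /= mulrCA divff ?gt_eqF // mulr1 mulrDr mulr1 mulrC addrC.
by [].
Qed.

Lemma D_lin (a b c t : R) :
  is_derive t (1:R) (fun s : R => (a + s * b) * c) (b * c).
Proof.
have H := is_deriveM (D_aff a b t) (@is_derive_cst _ _ _ c t 1).
eapply is_derive_eq; first exact H.
by rewrite /GRing.scale /= mulr0 add0r mulrC.
Qed.

Lemma D_cln (a b c k t : R) : 0 < a + t * b ->
  is_derive t (1:R) (fun s : R => c * (ln (a + s * b) + k)) (c * (b / (a + t * b))).
Proof.
move=> h.
have H := is_deriveM (@is_derive_cst _ _ _ c t 1)
  (is_deriveD (@D_ln a b t h) (@is_derive_cst _ _ _ k t 1)).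
eapply is_derive_eq; first exact H.
by rewrite /GRing.scale /= addr0 mulr0 addr0 mulrC.
Qed.

Definition hF (q d s : R) := (q + s*d) * ln (q + s*d) - (q + s*d) * ln q
  - ((1-q) + s*(-d)) * ln ((1-q)+s*(-d)) + ((1-q) + s*(-d)) * ln (1-q).
Definition hD (q d t : R) := d*(ln (q+t*d) + 1) - d * ln q
  - (-d)*(ln ((1-q)+t*(-d)) + 1) + (-d) * ln (1-q).
Definition hDD (q d t : R) := d * (d/(q+t*d)) - (-d) * ((-d)/((1-q)+t*(-d))).

Lemma hF_der (q d t : R) : 0 < q+t*d -> 0 < (1-q)+t*(-d) ->
  is_derive t (1:R) (hF q d) (hD q d t).
Proof.
move=> h1 h2.
have H := is_deriveD (is_deriveB (is_deriveB (@D_xln q d t h1) (D_lin q d (ln q) t))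
  (@D_xln (1-q) (-d) t h2)) (D_lin (1-q) (-d) (ln (1-q)) t).
eapply is_derive_eq; first exact H.
by [].
Qed.

Lemma hD_der (q d t : R) : 0 < q+t*d -> 0 < (1-q)+t*(-d) ->
  is_derive t (1:R) (hD q d) (hDD q d t).
Proof.
move=> h1 h2.
have H := is_deriveD (is_deriveB (is_deriveB (@D_cln q d d 1 t h1)
   (@is_derive_cst _ _ _ (d * ln q) t 1))
  (@D_cln (1-q) (-d) (-d) 1 t h2)) (@is_derive_cst _ _ _ ((-d) * ln (1-q)) t 1).
eapply is_derive_eq; first exact H.
by rewrite subr0 addr0.
Qed.


Lemma hess3 (r1 r2 r3 x1 x2 x3 : R) : 0 < r1 -> 0 < r2 -> 0 < r3 ->
  r1 + r2 + r3 = 1 -> x1 + x2 + x3 = 0 ->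
  0 <= (x1 * (x1 / r1) - (-x1) * ((-x1) / (1 - r1)))
     + (x2 * (x2 / r2) - (-x2) * ((-x2) / (1 - r2)))
     + (x3 * (x3 / r3) - (-x3) * ((-x3) / (1 - r3))).
Proof.
move=> h1 h2 h3 hr hx.
have e3 : r3 = 1 - r1 - r2 by lra.
have f3 : x3 = - x1 - x2 by lra.
have E : (x1 * (x1 / r1) - (-x1) * ((-x1) / (1 - r1)))
     + (x2 * (x2 / r2) - (-x2) * ((-x2) / (1 - r2)))
     + (x3 * (x3 / r3) - (-x3) * ((-x3) / (1 - r3))) =
   r1 * r2 * r3 * ((x1/r1 - x2/r2)^+2 / (r1 + r2) + (x1/r1 - x3/r3)^+2 / (r1 + r3)
     + (x2/r2 - x3/r3)^+2 / (r2 + r3)).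
  have n1 : 1 - r1 != 0 by rewrite subr_eq0 eq_sym lt_eqF //; lra.
  have n2 : 1 - r2 != 0 by rewrite subr_eq0 eq_sym lt_eqF //; lra.
  have n3 : 1 - r3 != 0 by rewrite subr_eq0 eq_sym lt_eqF //; lra.
  have m12 : r1 + r2 != 0 by rewrite gt_eqF //; lra.
  have m13 : r1 + r3 != 0 by rewrite gt_eqF //; lra.
  have m23 : r2 + r3 != 0 by rewrite gt_eqF //; lra.
  have g1 : r1 != 0 by rewrite gt_eqF.
  have g2 : r2 != 0 by rewrite gt_eqF.
  have g3 : r3 != 0 by rewrite gt_eqF.
  move: n3 m13 m23 g3; rewrite f3 e3 => n3 m13 m23 g3.
  by field; rewrite m23 g3 g2 m13 g1 m12.
rewrite E; apply: mulr_ge0; first by rewrite !mulr_ge0 // ltW.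
by rewrite !addr_ge0 // divr_ge0 ?sqr_ge0 // addr_ge0 // ltW.
Qed.


Fact K_key : unit. Proof. exact: tt. Qed.
Definition K (c m : R) := locked_with K_key (xlnx c - c * ln m).

Lemma xlnxE (c : R) : xlnx c = c * ln c.
Proof. by rewrite /xlnx; case: eqP => [->|]; rewrite ?mul0r. Qed.

Lemma KE (c m : R) : K c m = c * ln c - c * ln m.
Proof. by rewrite /K locked_withE xlnxE. Qed.

Lemma posc (q p t : R) : 0 < q -> 0 < p -> 0 <= t <= 1 -> 0 < q + t * (p - q).
Proof. move=> hq hp /andP[t0 t1]; nra. Qed.

Lemma L3int (p1 p2 p3 q1 q2 q3 : R) : 0 < p1 -> 0 < p2 -> 0 < p3 ->
  0 < q1 -> 0 < q2 -> 0 < q3 -> p1 + p2 + p3 = 1 -> q1 + q2 + q3 = 1 ->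
  K (1-p1) (1-q1) + K (1-p2) (1-q2) + K (1-p3) (1-q3) <=
  K p1 q1 + K p2 q2 + K p3 q3.
Proof.
move=> hp1 hp2 hp3 hq1 hq2 hq3 sp sq.
pose d1 := p1 - q1; pose d2 := p2 - q2; pose d3 := p3 - q3.
have sd : d1 + d2 + d3 = 0 by rewrite /d1 /d2 /d3; lra.
have P1 (t : R) : 0 <= t <= 1 -> 0 < q1 + t * d1 by move=> ht; exact: posc.
have P2 (t : R) : 0 <= t <= 1 -> 0 < q2 + t * d2 by move=> ht; exact: posc.
have P3 (t : R) : 0 <= t <= 1 -> 0 < q3 + t * d3 by move=> ht; exact: posc.
have C1 (t : R) : (1 - q1) + t * (- d1) = (q2 + t * d2) + (q3 + t * d3).
  have -> : q1 = 1 - q2 - q3 by lra.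
  have -> : d1 = - d2 - d3 by lra.
  ring.
have C2 (t : R) : (1 - q2) + t * (- d2) = (q1 + t * d1) + (q3 + t * d3).
  have -> : q2 = 1 - q1 - q3 by lra.
  have -> : d2 = - d1 - d3 by lra.
  ring.
have C3 (t : R) : (1 - q3) + t * (- d3) = (q1 + t * d1) + (q2 + t * d2).
  have -> : q3 = 1 - q1 - q2 by lra.
  have -> : d3 = - d1 - d2 by lra.
  ring.
have Q1 (t : R) : 0 <= t <= 1 -> 0 < (1 - q1) + t * (- d1).
  by move=> ht; rewrite C1 addr_gt0 // ?P2 ?P3.
have Q2 (t : R) : 0 <= t <= 1 -> 0 < (1 - q2) + t * (- d2).
  by move=> ht; rewrite C2 addr_gt0 // ?P1 ?P3.
have Q3 (t : R) : 0 <= t <= 1 -> 0 < (1 - q3) + t * (- d3).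
  by move=> ht; rewrite C3 addr_gt0 // ?P1 ?P2.
have H : 0 <= hF q1 d1 1 + hF q2 d2 1 + hF q3 d3 1.
apply: (@calc01 R (fun s => hF q1 d1 s + hF q2 d2 s + hF q3 d3 s)
  (fun s => hD q1 d1 s + hD q2 d2 s + hD q3 d3 s)
  (fun s => hDD q1 d1 s + hDD q2 d2 s + hDD q3 d3 s)).
- move=> t ht.
  have H := is_deriveD (is_deriveD (@hF_der q1 d1 t (P1 t ht) (Q1 t ht)) (@hF_der q2 d2 t (P2 t ht) (Q2 t ht)))
    (@hF_der q3 d3 t (P3 t ht) (Q3 t ht)).
  by eapply is_derive_eq; first exact H.
- move=> t ht.
  have H := is_deriveD (is_deriveD (@hD_der q1 d1 t (P1 t ht) (Q1 t ht)) (@hD_der q2 d2 t (P2 t ht) (Q2 t ht)))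
    (@hD_der q3 d3 t (P3 t ht) (Q3 t ht)).
  by eapply is_derive_eq; first exact H.
- move=> t ht; rewrite /hDD.
  have E (q d : R) : (1 - q) + t * (- d) = 1 - (q + t * d) by ring.
  rewrite !E; apply: hess3; [exact: P1 | exact: P2 | exact: P3 | | exact: sd].
  transitivity (q1 + q2 + q3 + t * (d1 + d2 + d3)); first by ring.
  by rewrite sd mulr0 addr0.
- by rewrite /hF !mul0r !addr0; ring.
- rewrite /hD !mul0r !addr0.
  transitivity (2 * (d1 + d2 + d3)); first by ring.
  by rewrite sd mulr0.
have e1 : q1 + 1 * d1 = p1 by rewrite mul1r /d1; ring.
have e2 : q2 + 1 * d2 = p2 by rewrite mul1r /d2; ring.
have e3 : q3 + 1 * d3 = p3 by rewrite mul1r /d3; ring.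
have f1 : (1 - q1) + 1 * (- d1) = 1 - p1 by rewrite mul1r /d1; ring.
have f2 : (1 - q2) + 1 * (- d2) = 1 - p2 by rewrite mul1r /d2; ring.
have f3 : (1 - q3) + 1 * (- d3) = 1 - p3 by rewrite mul1r /d3; ring.
move: H; rewrite /hF e1 e2 e3 f1 f2 f3 !KE.
move=> H.
rewrite -subr_ge0.
by move: H; set A := ln p1; set B := ln p2; set C := ln p3; lra.
Qed.

Lemma K0m (m : R) : K 0 m = 0.
Proof. by rewrite KE !mul0r subrr. Qed.

Lemma ln_le_sub1 (x : R) : 0 < x -> ln x <= x - 1.
Proof.
move=> x0; have h := @le_ln1Dx R (x - 1).
have e : 1 + (x - 1) = x by ring.
rewrite -{1}e; apply: h; lra.
Qed.

Lemma Kge (c m : R) : 0 <= c -> 0 <= m -> (m = 0 -> c = 0) -> c - m <= K c m.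
Proof.
move=> c0 m0 hs.
have [->|cpos] := eqVneq c 0; first by rewrite K0m sub0r oppr_le0.
have cp : 0 < c by rewrite lt_def cpos.
have mp : 0 < m.
  rewrite lt_def m0 andbT; apply/eqP => mz; move/eqP: cpos; apply; exact: hs.
have h := @ln_le_sub1 (m / c) (divr_gt0 mp cp).
rewrite ln_div ?posrE // in h.
have : c * (ln m - ln c) <= c * (m / c - 1) by rewrite ler_pM2l.
rewrite !mulrBr mulr1 mulrCA divff ?gt_eqF // mulr1 => h2.
rewrite KE; lra.
Qed.

Lemma L3edge (a b a' b' c' : R) : 0 <= a -> 0 <= b -> 0 <= a' -> 0 <= b' -> 0 <= c' ->
  a + b = 1 -> a' + b' + c' = 1 -> (a' = 0 -> a = 0) -> (b' = 0 -> b = 0) ->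
  K (1-a) (1-a') + K (1-b) (1-b') + K (1-0) (1-c') <= K a a' + K b b' + K 0 c'.
Proof.
move=> a0 b0 a'0 b'0 c'0 sab s' ha hb.
have -> : 1 - a = b by lra.
have -> : 1 - b = a by lra.
have -> : 1 - a' = b' + c' by lra.
have -> : 1 - b' = a' + c' by lra.
rewrite subr0 K0m addr0 !KE !mul1r ln1 sub0r.
have key (u u' : R) : 0 <= u -> 0 <= u' -> (u' = 0 -> u = 0) -> u' + c' <= 1 ->
   0 <= u * (ln (u' + c') - ln u' + ln (1 - c')).
  move=> u0 u'0 hu hle.
  have [->|unz] := eqVneq u 0; first by rewrite mul0r.
  apply: mulr_ge0 => //.
  have u'p : 0 < u'.
    rewrite lt_def u'0 andbT; apply/eqP => z; move/eqP: unz; apply; exact: hu.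
  have cp : 0 < 1 - c' by lra.
  suff : ln u' <= ln (u' + c') + ln (1 - c') by lra.
  rewrite -lnM ?posrE //; last lra.
  rewrite ler_ln ?posrE //; first nra.
  apply: mulr_gt0 => //; lra.
have k1 := key a a' a0 a'0 ha ltac:(lra).
have k2 := key b b' b0 b'0 hb ltac:(lra).
have e : ln (1 - c') = a * ln (1 - c') + b * ln (1 - c') by rewrite -mulrDl sab mul1r.
rewrite !mulrDr in k1 k2; rewrite !mulrN in k1 k2; lra.
Qed.

Lemma L3 (a b c a' b' c' : R) : 0 <= a -> 0 <= b -> 0 <= c ->
  0 <= a' -> 0 <= b' -> 0 <= c' -> a + b + c = 1 -> a' + b' + c' = 1 ->
  (a' = 0 -> a = 0) -> (b' = 0 -> b = 0) -> (c' = 0 -> c = 0) ->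
  K (1-a) (1-a') + K (1-b) (1-b') + K (1-c) (1-c') <= K a a' + K b b' + K c c'.
Proof.
move=> a0 b0 c0 a'0 b'0 c'0 s s' ha hb hc.
have [ce|cnz] := eqVneq c 0.
  by rewrite ce; apply: L3edge => //; lra.
have [be|bnz] := eqVneq b 0.
  rewrite be; have := @L3edge a c a' c' b' a0 c0 a'0 c'0 b'0 ltac:(lra) ltac:(lra) ha hc.
  lra.
have [ae|anz] := eqVneq a 0.
  rewrite ae; have := @L3edge b c b' c' a' b0 c0 b'0 c'0 a'0 ltac:(lra) ltac:(lra) hb hc.
  lra.
have pos (u u' : R) : 0 <= u -> 0 <= u' -> (u' = 0 -> u = 0) -> u != 0 -> 0 < u /\ 0 < u'.
  move=> u0 u'0 hu unz; split; first by rewrite lt_def unz.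
  rewrite lt_def u'0 andbT; apply/eqP => z; move/eqP: unz; apply; exact: hu.
have [ap a'p] := pos a a' a0 a'0 ha anz.
have [bp b'p] := pos b b' b0 b'0 hb bnz.
have [cp c'p] := pos c c' c0 c'0 hc cnz.
exact: L3int.
Qed.


Lemma K11 : K 1 1 = 0 :> R.
Proof. by rewrite KE subrr. Qed.

Lemma xlnx0 : xlnx 0 = 0 :> R.
Proof. by rewrite xlnxE mul0r. Qed.

Lemma xlnx1 : xlnx 1 = 0 :> R.
Proof. by rewrite xlnxE ln1 mulr0. Qed.

Lemma xlnx_le0 (c : R) : 0 <= c -> c <= 1 -> xlnx c <= 0.
Proof. move=> c0 c1; rewrite xlnxE; apply: mulr_ge0_le0 => //; exact: ln_le0. Qed.

Lemma xid (t c d m : R) : m = t * c + (1 - t) * d ->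
  xlnx m = t * xlnx c + (1 - t) * xlnx d - t * K c m - (1 - t) * K d m.
Proof. move=> ->; rewrite !KE !xlnxE; ring. Qed.

Lemma G3edge (a b : R) : a + b = 1 ->
  (xlnx (1 - a) - xlnx a) + (xlnx (1 - b) - xlnx b) + (xlnx (1 - 0) - xlnx 0) = 0.
Proof.
move=> s; have -> : 1 - a = b by lra.
have -> : 1 - b = a by lra.
rewrite subr0 xlnx1 xlnx0; ring.
Qed.

Lemma G3 (a b c : R) : 0 <= a -> 0 <= b -> 0 <= c -> a + b + c = 1 ->
  0 <= (xlnx (1 - a) - xlnx a) + (xlnx (1 - b) - xlnx b) + (xlnx (1 - c) - xlnx c).
Proof.
move=> a0 b0 c0 s.
have [ce|cnz] := eqVneq c 0.
  by rewrite ce G3edge //; lra.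
have [be|bnz] := eqVneq b 0.
  have := @G3edge a c ltac:(lra); rewrite be; lra.
have [ae|anz] := eqVneq a 0.
  have := @G3edge b c ltac:(lra); rewrite ae; lra.
have ap : 0 < a by rewrite lt_def anz.
have bp : 0 < b by rewrite lt_def bnz.
have cp : 0 < c by rewrite lt_def cnz.
pose t := a + b.
have tp : 0 < t by rewrite /t; lra.
have tnz : t != 0 by rewrite gt_eqF.
have ea : a / t + b / t = 1 by rewrite -mulrDl divff.
have a't : 0 <= a / t by rewrite divr_ge0 // ltW.
have b't : 0 <= b / t by rewrite divr_ge0 // ltW.
have i1 := @xid t (a / t) 0 a ltac:(by rewrite mulr0 addr0 mulrC divfK).
have i2 := @xid t (b / t) 0 b ltac:(by rewrite mulr0 addr0 mulrC divfK).
have i3 := @xid t 0 1 c ltac:(by rewrite mulr0 add0r mulr1 /t; lra).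
have i4 := @xid t (1 - a / t) 1 (1 - a)
  ltac:(by rewrite mulrBr mulr1 mulrC divfK // mulr1 /t; lra).
have i5 := @xid t (1 - b / t) 1 (1 - b)
  ltac:(by rewrite mulrBr mulr1 mulrC divfK // mulr1 /t; lra).
have i6 := @xid t 1 0 (1 - c) ltac:(by rewrite mulr1 mulr0 addr0 /t; lra).
have Ge := @G3edge (a / t) (b / t) ea.
have L1 := @L3 (a / t) (b / t) 0 a b c a't b't (lexx 0) (ltW ap) (ltW bp) (ltW cp)
  ltac:(lra) s ltac:(move=> h; lra) ltac:(move=> h; lra) ltac:(move=> h; lra).
have L2 := @L3 0 0 1 a b c (lexx 0) (lexx 0) ler01 (ltW ap) (ltW bp) (ltW cp)
  ltac:(lra) s ltac:(move=> h; lra) ltac:(move=> h; lra) ltac:(move=> h; lra).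
rewrite subr0 subrr in L2.
have ha : 1 - a / t = b / t by lra.
have hb : 1 - b / t = a / t by lra.
rewrite subr0 ha hb in L1.
rewrite ha hb in i4 i5.
rewrite ha hb subr0 in Ge.
move: L1; rewrite -subr_ge0 => L1. move: L2; rewrite -subr_ge0 => L2.
have tL1 := mulr_ge0 (ltW tp) L1.
have cL2 := mulr_ge0 (ltW cp) L2.
have ec : 1 - t = c by rewrite /t; lra.
rewrite ec in i1 i2 i3 i4 i5 i6.
rewrite i1 i2 i3 i4 i5 i6.
rewrite !xlnx0 !xlnx1 !K0m !mulr0 in tL1 cL2 Ge *.
lra.
Qed.
End Calc.

Arguments K {R}. Arguments K11 {R}. Arguments Kge {R}. Arguments L3 {R}. Arguments G3 {R}.
Arguments xlnx_le0 {R}. Arguments xid {R}. Arguments K0m {R}. Arguments KE {R}. Arguments xlnxE {R}.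
Arguments xlnx0 {R}. Arguments xlnx1 {R}.
Section Lists.
Variable R : realType.

Definition sup (x : R * R) := [/\ 0 <= x.1, 0 <= x.2 & (x.2 = 0 -> x.1 = 0)].

Lemma sum_ge0 (s : seq (R * R)) (f : R * R -> R) :
  (forall x, x \in s -> 0 <= f x) -> 0 <= \sum_(x <- s) f x.
Proof.
move=> h; rewrite big_seq_cond; apply: sumr_ge0 => x /andP[xs _]; exact: h.
Qed.

Lemma sum_sup0 (s : seq (R * R)) : (forall x, x \in s -> sup x) ->
  \sum_(x <- s) x.2 = 0 -> \sum_(x <- s) x.1 = 0.
Proof.
elim: s => [|x s IH] hs; first by rewrite !big_nil.
rewrite !big_cons => h.
have [x1 x2 x3] := hs x (mem_head x s).
have hs' : forall y, y \in s -> sup y by move=> y ys; apply: hs; rewrite inE ys orbT.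
have g2 : 0 <= \sum_(y <- s) y.2 by apply: sum_ge0 => y /hs' [].
have e2 : x.2 = 0 by lra.
rewrite (x3 e2) IH ?add0r //; lra.
Qed.

Lemma vtxK (s : seq (R * R)) : (forall x, x \in s -> sup x) ->
  \sum_(x <- s) x.1 <= 1 -> \sum_(x <- s) x.2 <= 1 ->
  (1 - \sum_(x <- s) x.2 = 0 -> 1 - \sum_(x <- s) x.1 = 0) ->
  \sum_(x <- s) K (1 - x.1) (1 - x.2) <=
  2 * K (1 - \sum_(x <- s) x.1) (1 - \sum_(x <- s) x.2) + \sum_(x <- s) K x.1 x.2.
Proof.
elim: (size s).+1 {-2}s (ltnSn (size s)) => // n IH [|x [|y s']] /= hsz hs h1 h2 h3.
- by rewrite !big_nil subr0 K11 mulr0 addr0.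
- rewrite !big_cons !big_nil !addr0 in h1 h2 h3 *.
  have [x1 x2 x3] := hs x (mem_head x [::]).
  have k1 := @Kge R x.1 x.2 x1 x2 x3.
  have k2 := @Kge R (1 - x.1) (1 - x.2) ltac:(lra) ltac:(lra) h3.
  lra.
- have [x1 x2 x3] := hs x (mem_head x _).
  have [y1 y2 y3] := hs y (ltac:(by rewrite !inE eqxx orbT)).
  have hs' : forall w, w \in s' -> sup w.
    by move=> w ws; apply: hs; rewrite !inE ws !orbT.
  have S1 : 0 <= \sum_(w <- s') w.1 by apply: sum_ge0 => w /hs' [].
  have S2 : 0 <= \sum_(w <- s') w.2 by apply: sum_ge0 => w /hs' [].
  rewrite !big_cons in h1 h2 h3 *.
  have := IH ((x.1 + y.1, x.2 + y.2) :: s').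
  rewrite !big_cons /= => IH'.
  have := IH' ltac:(by []).
  have sz : forall w, w \in (x.1 + y.1, x.2 + y.2) :: s' -> sup w.
    move=> w; rewrite inE => /orP[/eqP ->|]; last exact: hs'.
    split => /=; [lra | lra | move=> e].
    have ex : x.2 = 0 by lra.
    have ey : y.2 = 0 by lra.
    by rewrite (x3 ex) (y3 ey) addr0.
  move=> /(_ sz ltac:(lra) ltac:(lra)).
  have H3 : 1 - (x.2 + y.2 + \sum_(w <- s') w.2) = 0 ->
            1 - (x.1 + y.1 + \sum_(w <- s') w.1) = 0.
    by move=> e; rewrite -!addrA; apply: h3; rewrite !addrA.
  move=> /(_ H3) IHs.
  have L := @L3 R x.1 y.1 (1 - (x.1 + y.1)) x.2 y.2 (1 - (x.2 + y.2)) x1 y1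
    ltac:(lra) x2 y2 ltac:(lra) ltac:(ring) ltac:(ring) x3 y3.
  have L' : 1 - (x.2 + y.2) = 0 -> 1 - (x.1 + y.1) = 0.
    move=> e.
    have e2 : \sum_(w <- s') w.2 = 0 by lra.
    have e1 := sum_sup0 s' hs' e2.
    have := H3 ltac:(lra); lra.
  have {L L'} := L L'.
  have E : forall u : R, 1 - (1 - u) = u by move=> u; ring.
  rewrite !E => L.
  have A1 : x.1 + (y.1 + \sum_(j <- s') j.1) = x.1 + y.1 + \sum_(j <- s') j.1 by rewrite addrA.
  have A2 : x.2 + (y.2 + \sum_(j <- s') j.2) = x.2 + y.2 + \sum_(j <- s') j.2 by rewrite addrA.
  rewrite A1 A2.
  lra.
Qed.

Lemma sumR_ge0 (s : seq R) : (forall x, x \in s -> 0 <= x) -> 0 <= \sum_(x <- s) x.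
Proof.
move=> h; rewrite big_seq_cond; apply: sumr_ge0 => x /andP[xs _]; exact: h.
Qed.

Lemma vtxN (s : seq R) : (forall x, x \in s -> 0 <= x) -> \sum_(x <- s) x <= 1 ->
  2 * xlnx (1 - \sum_(x <- s) x) <= \sum_(x <- s) (xlnx (1 - x) - xlnx x).
Proof.
elim: (size s).+1 {-2}s (ltnSn (size s)) => // n IH [|x [|y s']] /= hsz hs h1.
- by rewrite !big_nil subr0 xlnx1 mulr0.
- rewrite !big_cons !big_nil !addr0 in h1 *.
  have x0 := hs x (mem_head x [::]).
  have k1 := xlnx_le0 x x0 h1.
  have k2 := xlnx_le0 (1 - x) ltac:(lra) ltac:(lra).
  lra.
- have x0 := hs x (mem_head x _).
  have y0 := hs y (ltac:(by rewrite !inE eqxx orbT)).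
  have hs' : forall w, w \in s' -> 0 <= w.
    by move=> w ws; apply: hs; rewrite !inE ws !orbT.
  have S1 : 0 <= \sum_(w <- s') w by apply: sumR_ge0.
  rewrite !big_cons in h1 *.
  have := IH ((x + y) :: s').
  rewrite !big_cons /= => IH'.
  have := IH' ltac:(by []).
  have sz : forall w, w \in (x + y) :: s' -> 0 <= w.
    move=> w; rewrite inE => /orP[/eqP ->|]; last exact: hs'.
    lra.
  move=> /(_ sz ltac:(lra)) IHs.
  have G := G3 x y (1 - (x + y)) x0 y0 ltac:(lra) ltac:(ring).
  have E : forall u : R, 1 - (1 - u) = u by move=> u; ring.
  rewrite !E in G.
  have A1 : x + (y + \sum_(j <- s') j) = x + y + \sum_(j <- s') j by rewrite addrA.
  rewrite A1.
  lra.
Qed.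
End Lists.

Arguments vtxK {R}. Arguments vtxN {R}.

Section Graph.
Variables (R : realType) (V : finType) (adj : rel V).
Hypothesis adj_irr : irreflexive adj.

Lemma card_edge (e : edge adj) : #|val e| = 2%N.
Proof.
case: e => e /= /existsP[u /existsP[v /andP[huv /eqP ->]]].
rewrite cards2; case: eqP => // uv; move: huv; rewrite uv adj_irr.
by [].
Qed.

Lemma dcount (F : edge adj -> R) :
  \sum_(v : V) \sum_(e : edge adj | v \in val e) F e = 2 * \sum_(e : edge adj) F e.
Proof.
under eq_bigr do rewrite big_mkcond.
rewrite exchange_big /= mulr_sumr; apply: eq_bigr => e _.
rewrite -big_mkcond /= sumr_const card_edge.
by rewrite mulr_natl.
Qed.


Lemma sum_conv (T : Type) (r : seq (edge adj)) (P : pred (edge adj)) (f : edge adj -> T) (G : T -> R) :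
  \sum_(w <- map f (seq.filter P r)) G w = \sum_(i <- r | P i) G (f i).
Proof. by rewrite big_map big_filter. Qed.

Lemma SB_ge0 (x : edge adj -> R) : FM x -> 0 <= SB x.
Proof.
move=> [x0 x1].
suff : 0 <= 2 * SB x by rewrite pmulr_rge0.
rewrite /SB mulrBr -dcount.
rewrite mulr_sumr -sumrB; apply: sumr_ge0 => v _.
rewrite subr_ge0.
have := vtxN [seq x e | e <- seq.filter (fun e : edge adj => v \in val e) (index_enum (edge adj))].
rewrite !sum_conv => H.
have := H ltac:(by move=> w /mapP[e _ ->]) (x1 v).
rewrite /vsum.
have -> : \sum_(e : edge adj | v \in val e) (- xlnx (x e) + xlnx (1 - x e)) =
   \sum_(i <- index_enum (edge adj) | v \in val i) (xlnx (1 - x i) - xlnx (x i)).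
  by apply: eq_bigr => e _; rewrite addrC.
by [].
Qed.

Definition D (x z : edge adj -> R) :=
  \sum_(e : edge adj) (K (x e) (z e) - K (1 - x e) (1 - z e))
  + \sum_(v : V) K (1 - vsum x v) (1 - vsum z v).

Lemma D_ge0 (x z : edge adj -> R) : FM x -> FM z ->
  (forall e, z e = 0 -> x e = 0) ->
  (forall v, 1 - vsum z v = 0 -> 1 - vsum x v = 0) -> 0 <= D x z.
Proof.
move=> [x0 x1] [z0 z1] se sv.
suff : 0 <= 2 * D x z by rewrite pmulr_rge0.
rewrite /D mulrDr -dcount mulr_sumr -big_split /=; apply: sumr_ge0 => v _.
have := vtxK [seq (x e, z e) | e <- seq.filter (fun e : edge adj => v \in val e) (index_enum (edge adj))].
rewrite !sum_conv /= => H.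
have := H ltac:(by move=> w /mapP[e _ ->]; rewrite /sup /=; split; [exact: x0 | exact: z0 | exact: se])
  (x1 v) (z1 v) (sv v).
rewrite /vsum sumrB => H2.
have -> : \sum_(e : edge adj | v \in val e) K (x e) (z e) =
   \sum_(i <- index_enum (edge adj) | v \in val i) K (x i) (z i) by [].
have -> : \sum_(e : edge adj | v \in val e) K (1 - x e) (1 - z e) =
   \sum_(i <- index_enum (edge adj) | v \in val i) K (1 - x i) (1 - z i) by [].
lra.
Qed.

Lemma vsum_lin (x y : edge adj -> R) (t : R) (v : V) :
  vsum (fun e => t * x e + (1 - t) * y e) v = t * vsum x v + (1 - t) * vsum y v.
Proof. by rewrite /vsum big_split /= -!mulr_sumr. Qed.

Lemma lin4 (I J : finType) (f1 f2 h1 h2 : I -> R) (g1 g2 k1 k2 : J -> R) (t : R) :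
  t * (\sum_i f1 i - \sum_j g1 j) + (1 - t) * (\sum_i f2 i - \sum_j g2 j)
  + t * (\sum_i h1 i + \sum_j k1 j) + (1 - t) * (\sum_i h2 i + \sum_j k2 j) =
  \sum_i (t * f1 i + (1 - t) * f2 i + t * h1 i + (1 - t) * h2 i)
  - \sum_j (t * g1 j + (1 - t) * g2 j - t * k1 j - (1 - t) * k2 j).
Proof.
rewrite !big_split /= !sumrN -!mulr_sumr; ring.
Qed.

Lemma SB_id (x y : edge adj -> R) (t : R) :
  SB (fun e => t * x e + (1 - t) * y e) =
  t * SB x + (1 - t) * SB y + t * D x (fun e => t * x e + (1 - t) * y e)
  + (1 - t) * D y (fun e => t * x e + (1 - t) * y e).
Proof.
rewrite /SB /D lin4; congr (_ - _); apply: eq_bigr.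
- move=> e _ /=.
  rewrite (@xid _ t (x e) (y e) (t * x e + (1 - t) * y e)) //.
  rewrite (@xid _ t (1 - x e) (1 - y e) (1 - (t * x e + (1 - t) * y e))); last by ring.
  ring.
- move=> v _ /=.
  rewrite (@xid _ t (1 - vsum x v) (1 - vsum y v) (1 - vsum (fun e => t * x e + (1 - t) * y e) v)).
    ring.
  rewrite vsum_lin; ring.
Qed.

Lemma supp (t a b : R) : 0 < t -> 0 <= 1 - t -> 0 <= a -> 0 <= b ->
  t * a + (1 - t) * b = 0 -> a = 0.
Proof.
move=> tp t1 a0 b0 e.
have h1 := mulr_ge0 (ltW tp) a0.
have h2 := mulr_ge0 t1 b0.
have : t * a = 0 by lra.
by move/eqP; rewrite mulf_eq0 gt_eqF //= => /eqP.
Qed.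

Lemma FM_conv (x y : edge adj -> R) (t : R) : FM x -> FM y -> 0 <= t <= 1 ->
  FM (fun e => t * x e + (1 - t) * y e).
Proof.
move=> [x0 x1] [y0 y1] /andP[t0 t1]; split.
- move=> e; apply: addr_ge0; apply: mulr_ge0 => //; lra.
- move=> v; rewrite vsum_lin.
  have := x1 v; have := y1 v; nra.
Qed.

Lemma Dterm (x y : edge adj -> R) (t : R) : FM x -> FM y -> 0 <= t <= 1 ->
  0 <= t * D x (fun e => t * x e + (1 - t) * y e).
Proof.
move=> hx hy ht; have hz := @FM_conv x y t hx hy ht.
case/andP: ht => t0 t1.
have [->|tnz] := eqVneq t 0; first by rewrite mul0r.
have tp : 0 < t by rewrite lt_def tnz.
apply: mulr_ge0 => //; apply: D_ge0 => //.
- move=> e /= ez; apply: (@supp t (x e) (y e) tp _ _ _ ez); [lra | exact: hx.1 | exact: hy.1].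
- move=> v.
  have E : 1 - vsum (fun e => t * x e + (1 - t) * y e) v =
    t * (1 - vsum x v) + (1 - t) * (1 - vsum y v) by rewrite vsum_lin; ring.
  rewrite E => ez; apply: (@supp t (1 - vsum x v) (1 - vsum y v) tp _ _ _ ez); first lra.
  + by have := hx.2 v; lra.
  + by have := hy.2 v; lra.
Qed.

End Graph.

Theorem proposition4p17 (R : realType) (V : finType) (adj : rel V)
  (adj_sym : symmetric adj) (adj_irr : irreflexive adj) :
  (forall x : edge adj -> R, FM x -> 0 <= SB x) /\
  (forall (x y : edge adj -> R) (t : R), FM x -> FM y -> 0 <= t <= 1 ->
     t * SB x + (1 - t) * SB y <= SB (fun e => t * x e + (1 - t) * y e)).
Proof.
split.
- move=> x hx; exact: (@SB_ge0 R V adj adj_irr x hx).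
- move=> x y t hx hy ht.
  rewrite (@SB_id R V adj x y t).
  have d1 := @Dterm R V adj adj_irr x y t hx hy ht.
  have ht' : 0 <= 1 - t <= 1 by case/andP: ht => ? ?; apply/andP; split; lra.
  have d2 := @Dterm R V adj adj_irr y x (1 - t) hy hx ht'.
  have E : (fun e => (1 - t) * y e + (1 - (1 - t)) * x e) =
           (fun e => t * x e + (1 - t) * y e).
    by apply: boolp.funext => e; ring.
  rewrite E in d2.
  lra.
Qed.
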